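(* Let $H$ be a simple undirected graph on vertex set $[n]$, let $\{u_i\}_{i=1}^n$ and $\{w_j\}_{j=1}^n$ be two orthonormal families in $\mathbb{C}^d$, let $\{e_i\}$ be the standard basis of $\mathbb{C}^n$, and let $K=\sum_{i=1}^n |e_i\rangle\langle u_i\otimes w_i|$. If $\rho\in\mathcal{F}_H$ is separable, then $Z_K(\rho)=K\rho K^*\in\operatorname{R}_1[\mathcal{M}_n^+(H)]$.
   Context: A bipartite PSD $\rho$ on $\mathbb{C}^d\otimes\mathbb{C}^d$ is separable if $\rho=\sum_k|v_k\rangle\langle v_k|\otimes|x_k\rangle\langle x_k|$ for finitely many vectors. For an $n\times n$ matrix $X$, $G(X)$ is the undirected graph on $[n]$ with edge set $\{\{i,j\}: i\ne j,\ X_{ij}X_{ji}\neq 0\}$. $\mathcal{M}_n^+(H)$ is the cone of $n\times n$ PSD matrices $X$ with $G(X)\subseteq H$. $D(\rho)_{ij}=\langle u_i\otimes w_j|\rho|u_i\otimes w_j\rangle$ and $\mathcal{F}_H=\{\rho\in(\mathcal{M}_d\otimes\mathcal{M}_d)^+: G(D(\rho))\subseteq H\}$. For a cone $\mathcal{C}\subseteq\mathcal{M}_n^+$, $\operatorname{R}_1[\mathcal{C}]$ is the convex cone generated by the rank-1 matrices belonging to $\mathcal{C}$. *)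

(* Defs.v *)
(* Complex scalars: an arbitrary numClosedFieldType C
   (e.g. complex R for R : realType). *)
From HB Require Import structures.
From mathcomp Require Import all_boot all_order all_algebra.
From mathcomp Require Import mxtens.
Set Implicit Arguments. Unset Strict Implicit. Unset Printing Implicit Defensive.
Import Order.TTheory GRing.Theory Num.Theory.
Local Open Scope ring_scope.

Section Defs.
Variable C : numClosedFieldType.

Definition ctmx m n (A : 'M[C]_(m, n)) : 'M[C]_(n, m) := (map_mx Num.conj A)^T.

(* positive semidefinite: <x|A|x> >= 0 for all x (over C this forces A Hermitian) *)
Definition psdmx n (A : 'M[C]_n) : Prop :=
  forall x : 'cV[C]_n, 0 <= (ctmx x *m A *m x) 0 0.

Definition ketbra m n (u : 'cV[C]_m) (v : 'cV[C]_n) : 'M[C]_(m, n) := u *m ctmx v.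

Definition tensv d (u w : 'cV[C]_d) : 'cV[C]_(d * d) := u *t w.

Definition separable d (rho : 'M[C]_(d * d)) : Prop :=
  exists (m : nat) (v x : 'I_m -> 'cV[C]_d),
    rho = \sum_(k < m) (ketbra (v k) (v k) *t ketbra (x k) (x k)).

(* G(X) is a subgraph of H: for i <> j, X_ij X_ji <> 0 implies {i,j} edge of H *)
Definition graph_sub n (X : 'M[C]_n) (H : rel 'I_n) : Prop :=
  forall i j : 'I_n, i != j -> X i j * X j i != 0 -> H i j.

Definition simple_graph n (H : rel 'I_n) : Prop :=
  irreflexive H /\ symmetric H.

Definition Mplus n (H : rel 'I_n) (X : 'M[C]_n) : Prop :=
  psdmx X /\ graph_sub X H.

Definition R1 n (cone : 'M[C]_n -> Prop) (X : 'M[C]_n) : Prop :=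
  exists (m : nat) (c : 'I_m -> C) (Y : 'I_m -> 'M[C]_n),
    (forall k, 0 <= c k) /\ (forall k, \rank (Y k) = 1%N) /\ (forall k, cone (Y k)) /\
    X = \sum_(k < m) c k *: Y k.

Definition Dmx n d (u w : 'I_n -> 'cV[C]_d) (rho : 'M[C]_(d * d)) : 'M[C]_n :=
  \matrix_(i, j) (ctmx (tensv (u i) (w j)) *m rho *m tensv (u i) (w j)) 0 0.

Definition FH n d (H : rel 'I_n) (u w : 'I_n -> 'cV[C]_d) (rho : 'M[C]_(d * d)) : Prop :=
  psdmx rho /\ graph_sub (Dmx u w rho) H.

Definition orthonormal_fam n d (u : 'I_n -> 'cV[C]_d) : Prop :=
  forall i j, (ctmx (u i) *m u j) 0 0 = (i == j)%:R.

Definition stdbasis n (i : 'I_n) : 'cV[C]_n := delta_mx i 0.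

Definition Kmx n d (u w : 'I_n -> 'cV[C]_d) : 'M[C]_(n, d * d) :=
  \sum_(i < n) ketbra (stdbasis i) (tensv (u i) (w i)).

Definition ZK n d (K : 'M[C]_(n, d * d)) (rho : 'M[C]_(d * d)) : 'M[C]_n :=
  K *m rho *m ctmx K.
End Defs.

(* Main.v *)
Require Import Defs.
From HB Require Import structures.
From mathcomp Require Import all_boot all_order all_algebra.
From mathcomp Require Import mxtens.
Import Order.TTheory GRing.Theory Num.Theory.
Local Open Scope ring_scope.

Section Helpers.
Variable C : numClosedFieldType.

Lemma ctmxM m n p (A : 'M[C]_(m,n)) (B : 'M[C]_(n,p)) :
  ctmx (A *m B) = ctmx B *m ctmx A.
Proof. by rewrite /ctmx map_mxM trmx_mul. Qed.

Lemma ctmxK m n (A : 'M[C]_(m,n)) : ctmx (ctmx A) = A.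
Proof. by apply/matrixP=> i j; rewrite !mxE conjCK. Qed.

Lemma ctmxT m n p q (A : 'M[C]_(m,n)) (B : 'M[C]_(p,q)) :
  ctmx (A *t B) = ctmx A *t ctmx B.
Proof. by rewrite /ctmx map_mxT trmx_tens. Qed.

Lemma ctmx_tensv k (y z : 'cV[C]_k) :
  ctmx (tensv y z) = (ctmx y *t ctmx z : 'M_(1, k * k)).
Proof. by apply/matrixP => i j; rewrite !mxE rmorphM. Qed.

Lemma tmul11 k l (A : 'M[C]_(1,k)) (B : 'M[C]_(1,l)) (Y : 'M[C]_(k,1)) (Z : 'M[C]_(l,1)) :
  (A *t B : 'M_(1, k * l)) *m (Y *t Z : 'M_(k * l, 1)) = ((A *m Y) *t (B *m Z) : 'M_1).
Proof. exact: (tensmx_mul A B Y Z). Qed.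

Lemma tmulL k l k' l' (A : 'M[C]_(1,k)) (B : 'M[C]_(1,l)) (Y : 'M[C]_(k,k')) (Z : 'M[C]_(l,l')) :
  (A *t B : 'M_(1, k * l)) *m (Y *t Z) = ((A *m Y) *t (B *m Z) : 'M_(1, k' * l')).
Proof. exact: (tensmx_mul A B Y Z). Qed.

Lemma tmulR k l k' l' (A : 'M[C]_(k,1)) (B : 'M[C]_(l,1)) (Y : 'M[C]_(1,k')) (Z : 'M[C]_(1,l')) :
  (A *t B : 'M_(k * l, 1)) *m (Y *t Z : 'M_(1, k' * l')) = ((A *m Y) *t (B *m Z)).
Proof. exact: (tensmx_mul A B Y Z). Qed.

Lemma tens11 (A B : 'M[C]_1) : (A *t B) 0 0 = A 0 0 * B 0 0.
Proof. rewrite mxE; congr (A _ _ * B _ _); apply: ord1. Qed.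

Lemma mul11 k (A : 'M[C]_(1,k)) (B : 'M[C]_(k,1)) (E : 'M[C]_1) :
  ((A *m B) *m E) 0 0 = (A *m B) 0 0 * E 0 0.
Proof. by rewrite [in LHS]mxE big_ord1. Qed.

Lemma ct11 (A : 'M[C]_1) : ctmx A 0 0 = (A 0 0)^*.
Proof. by rewrite !mxE. Qed.

Lemma quad k (y v : 'cV[C]_k) :
  ((ctmx y *m (v *m ctmx v)) *m y) 0 0 =
  (ctmx y *m v) 0 0 * ((ctmx y *m v) 0 0)^*.
Proof.
rewrite mulmxA -mulmxA mul11 -[ctmx v *m y]ctmxK ctmxM ctmxK ct11 //.
Qed.

Lemma ent n (b : 'cV[C]_n) i j : (b *m ctmx b) i j = b i 0 * (b j 0)^*.
Proof. by rewrite mxE big_ord1 !mxE. Qed.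

Lemma rank1 n (b : 'cV[C]_n) : b != 0 -> \rank (b *m ctmx b) = 1%N.
Proof.
move=> bn0; apply/eqP; rewrite eqn_leq; apply/andP; split.
  exact: leq_trans (mxrankM_maxl _ _) (rank_leq_col _).
rewrite lt0n mxrank_eq0; apply: contra bn0 => /eqP h.
apply/eqP/matrixP => i j; rewrite (ord1 j) [RHS]mxE.
have := congr1 (fun M : 'M[C]_n => M i i) h; rewrite ent mxE => /eqP.
by rewrite mul_conjC_eq0 => /eqP.
Qed.

Lemma psd1 n (b : 'cV[C]_n) : psdmx (b *m ctmx b).
Proof. by move=> y; rewrite quad mul_conjC_ge0. Qed.

End Helpers.

Theorem mainTheorem5 (C : numClosedFieldType) (n d : nat) (H : rel 'I_n)
    (u w : 'I_n -> 'cV[C]_d) (rho : 'M[C]_(d * d)) :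
  simple_graph H -> orthonormal_fam u -> orthonormal_fam w ->
  FH H u w rho -> separable rho ->
  R1 (Mplus H) (ZK (Kmx u w) rho).
Proof.
move=> _ _ _ [_ gs] [m [v [x rhoE]]].
set K := Kmx u w.
pose p k := tensv (v k) (x k).
have Hterm k : ketbra (v k) (v k) *t ketbra (x k) (x k) = p k *m ctmx (p k).
  by rewrite /p /= ctmx_tensv /tensv tmulR.
pose a k := K *m p k.
have HZ : ZK K rho = \sum_(k < m) a k *m ctmx (a k).
  rewrite /ZK rhoE mulmx_sumr mulmx_suml; apply: eq_bigr => k _.
  by rewrite Hterm /a ctmxM !mulmxA.
pose al i k := (ctmx (u i) *m v k) 0 0.
pose be i k := (ctmx (w i) *m x k) 0 0.
have Ha k i : a k i 0 = al i k * be i k.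
  rewrite /a /K /Kmx mulmx_suml summxE (bigD1 i) //= big1 => [|l /negbTE nl].
    rewrite addr0 /ketbra -mulmxA /p /= ctmx_tensv /tensv tmul11 [in LHS]mxE big_ord1.
    by rewrite tens11 /stdbasis [delta_mx _ _ _ _]mxE !eqxx /= mul1r.
  by rewrite /ketbra -mulmxA [in LHS]mxE big_ord1 /stdbasis [delta_mx _ _ _ _]mxE eq_sym nl /= mul0r.
have HD i j : Dmx u w rho i j =
    \sum_(k < m) (al i k * (al i k)^* * (be j k * (be j k)^*)).
  rewrite mxE rhoE mulmx_sumr mulmx_suml summxE; apply: eq_bigr => k _.
  by rewrite ctmx_tensv /tensv /ketbra tmulL tmul11 tens11 !quad.
have Dpos i j k : al i k != 0 -> be j k != 0 -> Dmx u w rho i j != 0.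
  move=> h1 h2; apply: lt0r_neq0; rewrite HD (bigD1 k) //=.
  apply: (@lt_le_trans _ _ (al i k * (al i k)^* * (be j k * (be j k)^*))).
    by apply: mulr_gt0; rewrite mul_conjC_gt0.
  rewrite lerDl; apply: sumr_ge0 => l _; apply: mulr_ge0; exact: mul_conjC_ge0.
case: n H u w gs K a al be Ha HD Dpos HZ => [|n'] H u w gs K a al be Ha HD Dpos HZ.
  exists 0%N, (fun _ => 0), (fun _ => 0); split; first by case.
  split; first by case. split; first by case.
  by apply/matrixP => [[]].
pose b k := if a k != 0 then a k else delta_mx 0 0.
exists m, (fun k => (a k != 0)%:R), (fun k => b k *m ctmx (b k)).
have bn0 k : b k != 0.
  rewrite /b; case: ifP => // _; apply/eqP => /matrixP /(_ 0 0).
  by rewrite !mxE eqxx /= => /eqP; rewrite oner_eq0.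
split; first by move=> k; rewrite ler0n.
split; first by move=> k; exact: rank1.
split.
  move=> k; split; first exact: psd1.
  move=> i j ij; rewrite !ent /b; case: ifP => [ak|_].
    rewrite !Ha; move=> nz.
    rewrite !rmorphM !mulf_eq0 !conjC_eq0 !negb_or in nz.
    case/andP: nz => /andP [/andP [a1 b1] _] /andP [/andP [a2 b2] _].
    apply: gs => //; apply: mulf_neq0; [exact: Dpos a1 b2 | exact: Dpos a2 b1].
  rewrite !mxE /=; case: (i =P 0) => [ei|_]; last by rewrite !mul0r eqxx.
  case: (j =P 0) => [ej|_]; first by rewrite ei ej eqxx in ij.
  by rewrite /= !(mul0r, mulr0, rmorph0) eqxx.
rewrite HZ; apply: eq_bigr => k _; rewrite /b.
case: (a k =P 0) => [->|_] /=; first by rewrite scale0r mul0mx.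
by rewrite scale1r.
Qed.
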